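(* Let $\mathbf{k}$ be an algebraically closed field, $G=\mathrm{GL}_n$, and $M$ a finite-dimensional completely reducible rational $G$-module. Let $\underline{G}=G\ltimes M$ and $\underline{\mathcal{N}}=\mathcal{N}\times M$ the nilpotent cone of $\mathrm{Lie}(\underline{G})$. If $\underline{\mathcal{N}}$ has finitely many orbits under the adjoint $\underline{G}$-action, then $M$ is an irreducible $G$-module.
   Context: $\underline{G}$ is $G\times M$ with product $(g_1,v_1)(g_2,v_2)=(g_1g_2,g_1.v_2+v_1)$; its Lie algebra is $\mathfrak{gl}_n\times M$ and its adjoint action is $\mathrm{Ad}(g,v)(X,w)=(\mathrm{Ad}(g)X,-(\mathrm{Ad}(g)X).v+g.w)$. $\mathcal{N}$ is the nilpotent cone of $\mathfrak{gl}_n$. *)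

(* Defs.v *)
From HB Require Import structures.
From mathcomp Require Import all_boot all_order all_algebra.
From mathcomp Require Import mpoly.
Set Implicit Arguments. Unset Strict Implicit. Unset Printing Implicit Defensive.
Import Order.TTheory GRing.Theory Num.Theory.
Local Open Scope ring_scope.

Section RatRep.
Variables (k : fieldType) (n m : nat).

(* A rational representation GL_n(k) -> GL_m(k) is given by polynomial data:
   rho(g)_{ij} = P_{ij}(g_{ab}) / det(g)^N, where the n*n variables of P_{ij}
   are the matrix entries (variable mxvec_index a b <-> entry g_{ab}). *)
Definition ratrep (P : 'I_m -> 'I_m -> {mpoly k[n * n]}) (N : nat)
  (g : 'M[k]_n) : 'M[k]_m :=
  \matrix_(i, j) ((P i j).@[fun t => mxvec g 0 t] / \det g ^+ N).

Definition curveI (X : 'M[k]_n) : 'M[{poly k}]_n :=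
  1%:M + 'X *: map_mx polyC X.

(* the differential d rho (X) = d/d eps [rho(1 + eps X)] at eps = 0,
   computed by the quotient rule on P_{ij}(1+eps X) / det(1+eps X)^N *)
Definition dratrep (P : 'I_m -> 'I_m -> {mpoly k[n * n]}) (N : nat)
  (X : 'M[k]_n) : 'M[k]_m :=
  \matrix_(i, j)
    (let f := mmap polyC (fun t => mxvec (curveI X) 0 t) (P i j) in
     let d := \det (curveI X) ^+ N in
     (f^`().[0] * d.[0] - f.[0] * d^`().[0]) / d.[0] ^+ 2).

Definition is_rep (P : 'I_m -> 'I_m -> {mpoly k[n * n]}) (N : nat) : Prop :=
  ratrep P N 1%:M = 1%:M /\
  forall g h : 'M[k]_n, g \in unitmx -> h \in unitmx ->
    ratrep P N (g *m h) = ratrep P N g *m ratrep P N h.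

(* M = column vectors k^m, g.v = rho(g) v.  A subspace is encoded by a matrix
   whose row space is the set of transposes of its vectors. *)
Definition stable_sub (P : 'I_m -> 'I_m -> {mpoly k[n * n]}) (N : nat)
  (U : 'M[k]_m) : Prop :=
  forall g : 'M[k]_n, g \in unitmx -> (U *m (ratrep P N g)^T <= U)%MS.

Definition irr_sub P N (U : 'M[k]_m) : Prop :=
  [/\ stable_sub P N U, (0 < \rank U)%N &
      forall V : 'M[k]_m, stable_sub P N V -> (V <= U)%MS ->
        (V == (0 : 'M[k]_m))%MS \/ (V == U)%MS].

Definition irreducible_mod P N : Prop := irr_sub P N 1%:M.

Definition compl_reducible P N : Prop :=
  exists (r : nat) (U : 'I_r -> 'M[k]_m),
    [/\ forall i, irr_sub P N (U i),
        mxdirect (\sum_(i < r) U i) &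
        (\sum_(i < r) U i == 1%:M)%MS].

Definition nilcone (X : 'M[k]_n) : Prop := exists r : nat, X ^+ r = 0.

Definition Ad_semi P N (g : 'M[k]_n) (v : 'cV[k]_m)
  (Xw : 'M[k]_n * 'cV[k]_m) : 'M[k]_n * 'cV[k]_m :=
  let Y := g *m Xw.1 *m invmx g in
  (Y, - (dratrep P N Y *m v) + ratrep P N g *m Xw.2).

Definition finitely_many_orbits P N : Prop :=
  exists s : seq ('M[k]_n * 'cV[k]_m),
    forall x : 'M[k]_n * 'cV[k]_m, nilcone x.1 ->
      exists2 y, y \in s &
        exists (g : 'M[k]_n) (v : 'cV[k]_m), g \in unitmx /\ x = Ad_semi P N g v y.

End RatRep.

(* Main.v *)
Require Import Defs.
From HB Require Import structures.
From mathcomp Require Import all_boot all_order all_algebra.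
From mathcomp Require Import mpoly.
From Stdlib Require Import Classical.
From mathcomp Require Import zify.
From Stdlib Require Import Lia.
Set Implicit Arguments. Unset Strict Implicit. Unset Printing Implicit Defensive.
Import Order.TTheory GRing.Theory Num.Theory.
Local Open Scope ring_scope.

Section Poly.
Variable k : closedFieldType.
Implicit Types p q : {poly k}.

Lemma poly_eq0_all p : (forall u, p.[u] = 0) -> p = 0.
Proof.
move=> H; apply/eqP; apply/negPn/negP => /closed_nonrootP [x].
by rewrite /root H eqxx.
Qed.

Lemma poly_eq_all p q : (forall u, p.[u] = q.[u]) -> p = q.
Proof.
move=> H; apply/eqP; rewrite -subr_eq0; apply/eqP/poly_eq0_all => u.
by rewrite hornerD hornerN H subrr.
Qed.

Lemma poly_noroot_const p : (forall u, p.[u] != 0) -> forall u v, p.[u] = p.[v].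
Proof.
move=> H.
have : (size p <= 1)%N.
  rewrite leqNgt; apply/negP => Hs.
  have /closed_rootP [x] : size p != 1 by rewrite neq_ltn Hs orbT.
  by rewrite /root (negbTE (H x)).
by move=> /size1_polyC -> u v; rewrite !hornerC.
Qed.

Lemma poly_mono p : (forall u, u != 0 -> p.[u] != 0) ->
  exists e, forall u, p.[u] = p.[1] * u ^+ e.
Proof.
move=> H; have [r Hr] := closed_field_poly_normal p.
have Hz : forall z, z \in r -> z = 0.
  move=> z zr; apply/eqP; apply/negPn/negP => /H; rewrite Hr hornerZ.
  rewrite horner_prod (big_rem z zr) /= hornerXsubC subrr mul0r mulr0.
  by rewrite eqxx.
have Hp : forall u, p.[u] = lead_coef p * u ^+ size r.
  move=> u; rewrite [in LHS]Hr hornerZ horner_prod; congr (_ * _).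
  elim: r Hz {Hr} => [|z r IH] Hz; first by rewrite big_nil.
  rewrite big_cons IH; last by move=> y yr; apply: Hz; rewrite inE yr orbT.
  by rewrite hornerXsubC (Hz z (mem_head _ _)) subr0 exprS.
exists (size r) => u; by rewrite !Hp expr1n mulr1.
Qed.


Lemma horner_mmap (n : nat) (h : 'I_n -> {poly k}) (p : {mpoly k[n]}) (u : k) :
  (mmap polyC h p).[u] = p.@[fun i => (h i).[u]].
Proof.
rewrite /mmap mevalE.
rewrite horner_sum; apply: eq_bigr => m _.
rewrite hornerM hornerC /mmap1.
congr (_ * _).
rewrite (big_morph (fun p : {poly k} => p.[u]) (fun a b => hornerM a b u) (hornerC 1 u)).
by apply: eq_bigr => i _; rewrite horner_exp.
Qed.

Definition evm u a b (M : 'M[{poly k}]_(a,b)) := map_mx (horner_eval u) M.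

Lemma evmM u a b c (X : 'M[{poly k}]_(a,b)) (Y : 'M[{poly k}]_(b,c)) :
  evm u (X *m Y) = evm u X *m evm u Y.
Proof. exact: map_mxM. Qed.

Lemma evmC u a b (C : 'M[k]_(a,b)) : evm u (map_mx polyC C) = C.
Proof. by apply/matrixP => i j; rewrite !mxE /= horner_evalE hornerC. Qed.

Lemma evmD u a b (X Y : 'M[{poly k}]_(a,b)) : evm u (X + Y) = evm u X + evm u Y.
Proof. by apply/matrixP => i j; rewrite !mxE /= !horner_evalE hornerD. Qed.

Lemma evm_tr u a b (X : 'M[{poly k}]_(a,b)) : evm u X^T = (evm u X)^T.
Proof. by apply/matrixP => i j; rewrite !mxE. Qed.

Lemma polymx_eq a b (X Y : 'M[{poly k}]_(a,b)) :
  (forall u, evm u X = evm u Y) -> X = Y.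
Proof.
move=> H; apply/matrixP => i j; apply: poly_eq_all => u.
by have /matrixP /(_ i j) := H u; rewrite !mxE.
Qed.

Definition Ed (p : {poly k}) := p^`().[0].
Definition Emx a b (M : 'M[{poly k}]_(a,b)) := map_mx Ed M.

Lemma Ed_sum I (r : seq I) (F : I -> {poly k}) : Ed (\sum_(i <- r) F i) = \sum_(i <- r) Ed (F i).
Proof.
rewrite /Ed; elim: r => [|x r IH]; first by rewrite !big_nil deriv0 horner0.
by rewrite !big_cons derivD hornerD IH.
Qed.

Lemma Ed_Cl c p : Ed (c%:P * p) = c * Ed p.
Proof. by rewrite /Ed derivM derivC mul0r add0r hornerM hornerC. Qed.

Lemma Ed_Cr c p : Ed (p * c%:P) = Ed p * c.
Proof. by rewrite /Ed derivM derivC mulr0 addr0 hornerM hornerC. Qed.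

Lemma Emx_mulCl a b c (C : 'M[k]_(a,b)) (F : 'M[{poly k}]_(b,c)) :
  Emx (map_mx polyC C *m F) = C *m Emx F.
Proof.
apply/matrixP => i j; rewrite !mxE Ed_sum; apply: eq_bigr => l _.
by rewrite !mxE Ed_Cl.
Qed.

Lemma Emx_mulCr a b c (C : 'M[k]_(b,c)) (F : 'M[{poly k}]_(a,b)) :
  Emx (F *m map_mx polyC C) = Emx F *m C.
Proof.
apply/matrixP => i j; rewrite !mxE Ed_sum; apply: eq_bigr => l _.
by rewrite !mxE Ed_Cr.
Qed.

Lemma Emx_tr a b (F : 'M[{poly k}]_(a,b)) : Emx F^T = (Emx F)^T.
Proof. by apply/matrixP => i j; rewrite !mxE. Qed.

Lemma Ed_comp p t : Ed (p \Po (t *: 'X)) = t * Ed p.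
Proof.
rewrite /Ed deriv_comp hornerM horner_comp derivZ derivX !hornerZ hornerX.
by rewrite mulr0 hornerC mulr1 mulrC.
Qed.

End Poly.

Section Eig.
Variable k : closedFieldType.

Lemma eig_closed r (A : 'M[k]_r) : (0 < r)%N -> exists a, eigenvalue A a.
Proof.
move=> r0; have /closed_rootP [a rAa] : size (char_poly A) != 1%N.
  by rewrite size_char_poly; case: (r) r0.
by exists a; rewrite eigenvalue_root_char.
Qed.


Lemma comm_eig (r : nat) (S : 'M[k]_r -> Prop) : (0 < r)%N ->
  (forall A B, S A -> S B -> A *m B = B *m A) ->
  exists2 v : 'rV[k]_r, v != 0 & forall A, S A -> (v *m A <= v)%MS.
Proof.
elim/ltn_ind: r S => r IH S r0 Hc.
case: (classic (exists A a, S A /\ eigenvalue A a /\ (\rank (eigenspace A a) < r)%N)).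
  move=> [A [a [SA [ea ra]]]].
  pose E := eigenspace A a.
  have rE : (0 < \rank E)%N by rewrite lt0n mxrank_eq0.
  pose S' := fun B' => exists2 B, S B & B' = restrictmx E B.
  have stE : forall B, S B -> stablemx E B.
    by move=> B SB; apply: comm_mx_stable_eigenspace; apply: Hc.
  have [v v0 Hv] : exists2 v : 'rV[k]_(\rank E), v != 0 & forall A, S' A -> (v *m A <= v)%MS.
    apply: (IH _ ra S' rE) => _ _ [B SB ->] [B' SB' ->].
    by rewrite -!conjmxM ?inE ?stablemx_row_base ?stE // Hc.
  exists (v *m row_base E); first by rewrite mulmx_free_eq0 ?row_base_free.
  move=> B SB; rewrite -stablemx_restrict ?stE //.
  by apply: Hv; exists B.
move=> Hn.
have [i0 _] : exists i0 : 'I_r, True by exists (Ordinal r0).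
exists (delta_mx 0 i0).
  apply/negP => /eqP /matrixP /(_ 0 i0); rewrite !mxE !eqxx /= => /eqP.
  by rewrite oner_eq0.
move=> A SA; have [a ea] := eig_closed A r0.
have rE : \rank (eigenspace A a) = r.
  apply/eqP; rewrite eqn_leq rank_leq_col leqNgt; apply/negP => H.
  by apply: Hn; exists A, a.
have : ((delta_mx 0 i0 : 'rV[k]_r) <= eigenspace A a)%MS by rewrite submx_full // /row_full rE.
by move/eigenspaceP => ->; rewrite scalemx_sub.
Qed.

End Eig.

Section Rep.
Variables (k : closedFieldType) (n m : nat) (P : 'I_m -> 'I_m -> {mpoly k[n * n]}) (N : nat).
Hypothesis Hrep : is_rep P N.

Local Notation rho := (ratrep P N).

Definition curve (A B : 'M[k]_n) : 'M[{poly k}]_n :=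
  map_mx polyC A + 'X *: map_mx polyC B.

Definition Fpoly (A B : 'M[k]_n) : 'M[{poly k}]_m :=
  \matrix_(i, j) mmap polyC (fun t => mxvec (curve A B) 0 t) (P i j).

Lemma curve_eval u A B : evm u (curve A B) = A + u *: B.
Proof.
apply/matrixP => i j; rewrite !mxE /= horner_evalE hornerD hornerC.
by rewrite hornerM hornerX hornerC.
Qed.

Lemma Fpoly_eval u A B :
  evm u (Fpoly A B) = \matrix_(i, j) (P i j).@[fun t => mxvec (A + u *: B) 0 t].
Proof.
apply/matrixP => i j; rewrite !mxE /= horner_evalE horner_mmap.
apply: meval_eq => t; rewrite -curve_eval /evm -map_mxvec.
by rewrite mxE.
Qed.

Lemma ratrepE g :
  rho g = (\det g ^+ N)^-1 *: \matrix_(i, j) (P i j).@[fun t => mxvec g 0 t].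
Proof. by apply/matrixP => i j; rewrite !mxE mulrC. Qed.

Lemma rho_curve u A B :
  rho (A + u *: B) = (\det (A + u *: B) ^+ N)^-1 *: evm u (Fpoly A B).
Proof. by rewrite Fpoly_eval ratrepE. Qed.

Lemma rho_curve1 u A B : \det (A + u *: B) = 1 ->
  rho (A + u *: B) = evm u (Fpoly A B).
Proof. by move=> H; rewrite rho_curve H expr1n invr1 scale1r. Qed.

Lemma rho1 : rho 1%:M = 1%:M.
Proof. by case: Hrep. Qed.

Lemma rhoM g h : g \in unitmx -> h \in unitmx -> rho (g *m h) = rho g *m rho h.
Proof. by case: Hrep => _; apply. Qed.

Lemma rho_unit g : g \in unitmx -> rho g \in unitmx.
Proof.
move=> gu; apply: (proj1 (@mulmx1_unit _ _ _ (rho (invmx g)) _)).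
by rewrite -rhoM ?unitmx_inv // mulmxV // rho1.
Qed.


Definition slow (B : 'M[k]_n) := forall i j : 'I_n, (i <= j)%N -> B i j = 0.

Lemma det_unip u B : slow B -> \det (1%:M + u *: B) = 1.
Proof.
move=> sB; rewrite det_trig.
  by rewrite big1 // => i _; rewrite !mxE sB // eqxx mulr0 addr0.
apply/is_trig_mxP => i j ij; rewrite !mxE sB ?(ltnW ij) // mulr0 addr0.
by rewrite -val_eqE /= (ltn_eqF ij).
Qed.

Lemma curveI_curve B : curveI B = curve 1%:M B.
Proof. by rewrite /curveI /curve map_mx1. Qed.

Lemma det_curve_unip B : slow B -> \det (curve 1%:M B) = 1.
Proof.
move=> sB; rewrite det_trig.
  by rewrite big1 // => i _; rewrite !mxE sB // eqxx mulr0 addr0.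
apply/is_trig_mxP => i j ij; rewrite !mxE sB ?(ltnW ij) // mulr0 addr0.
by rewrite -val_eqE /= (ltn_eqF ij).
Qed.

Lemma dratrep_slow B : slow B -> dratrep P N B = Emx (Fpoly 1%:M B).
Proof.
move=> sB; apply/matrixP => i j; rewrite !mxE /=.
rewrite curveI_curve det_curve_unip // expr1n -polyC1 derivC !hornerC mulr0 subr0.
by rewrite expr1n invr1 !mulr1.
Qed.


Definition J : 'M[k]_n := \matrix_(i, j) ((i == j.+1 :> nat)%:R).

Lemma slowJ : slow J.
Proof.
move=> i j ij; rewrite mxE; case: eqP => // Hi.
by move: ij; rewrite Hi ltnn.
Qed.

Lemma unip_unit u B : slow B -> (1%:M + u *: B) \in unitmx.
Proof. by move=> sB; rewrite unitmxE det_unip // unitr1. Qed.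

Definition FJ := Fpoly 1%:M J.
Definition D := Emx FJ.

Lemma rho_unipJ u : rho (1%:M + u *: J) = evm u FJ.
Proof. by rewrite rho_curve1 // det_unip //; exact: slowJ. Qed.

Lemma D_comm c : c \in unitmx -> c *m J = J *m c -> rho c *m D = D *m rho c.
Proof.
move=> cu cJ.
have H : map_mx polyC (rho c) *m FJ = FJ *m map_mx polyC (rho c).
  apply: polymx_eq => u; rewrite !evmM !evmC -rho_unipJ -!rhoM //;
    try exact: (unip_unit _ slowJ).
  by rewrite mulmxDr mulmxDl mulmx1 mul1mx -!scalemxAr -scalemxAl cJ.
by rewrite /D -Emx_mulCl H Emx_mulCr.
Qed.

Lemma D_stable U : stable_sub P N U -> (U *m D^T <= U)%MS.
Proof.
move=> sU; rewrite submxE.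
have H : map_mx polyC U *m FJ^T *m map_mx polyC (cokermx U) = 0.
  apply: polymx_eq => u; rewrite !evmM !evmC evm_tr -rho_unipJ.
  have := sU _ (unip_unit u slowJ); rewrite submxE => /eqP ->.
  by apply/matrixP => i j; rewrite !mxE /= horner_evalE horner0.
have := congr1 (@Emx _ _ _) H; rewrite Emx_mulCr Emx_mulCl Emx_tr -/D => ->.
by apply/eqP/matrixP => i j; rewrite !mxE /Ed deriv0 horner0.
Qed.

Definition hdiag (t : k) : 'M[k]_n := diag_mx (\row_(i < n) t ^+ i).

Lemma hdiag_unit t : t != 0 -> hdiag t \in unitmx.
Proof.
move=> t0; rewrite unitmxE det_diag unitfE prodf_seq_neq0; apply/allP => i _ /=.
by rewrite mxE expf_neq0.
Qed.

Lemma hdiagJ t : hdiag t *m J = t *: (J *m hdiag t).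
Proof.
apply/matrixP => i j; rewrite mul_diag_mx mul_mx_diag !mxE.
case: (i == j.+1 :> nat) /eqP => [->|_]; last by rewrite !mulr0 mul0r mulr0.
by rewrite mulr1 mul1r exprS.
Qed.

Lemma D_scale t : t != 0 -> rho (hdiag t) *m D = t *: (D *m rho (hdiag t)).
Proof.
move=> t0.
pose G := map_mx (comp_poly (t *: 'X)) FJ.
have HG : forall u, evm u G = rho (1%:M + (t * u) *: J).
  move=> u; rewrite rho_unipJ; apply/matrixP => i j.
  by rewrite !mxE /= !horner_evalE horner_comp hornerZ hornerX.
have H : map_mx polyC (rho (hdiag t)) *m FJ = G *m map_mx polyC (rho (hdiag t)).
  apply: polymx_eq => u; rewrite !evmM !evmC HG -rho_unipJ -!rhoM //;
    try exact: (unip_unit _ slowJ); try exact: hdiag_unit.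
  rewrite mulmxDr mulmxDl mulmx1 mul1mx -!scalemxAr hdiagJ.
  by rewrite scalerA mulrC scalemxAl.
have EG : Emx G = t *: D.
  by apply/matrixP => i j; rewrite !mxE /= Ed_comp.
by rewrite /D -Emx_mulCl H Emx_mulCr EG scalemxAl.
Qed.


Lemma D_eig0 mu : eigenvalue (D^T) mu -> mu = 0.
Proof.
move=> /eigenvalueP [v vD v0]; apply/eqP/negPn/negP => mu0.
have Hz : forall z, z != 0 -> root (char_poly (D^T)) z.
  move=> z z0; rewrite -eigenvalue_root_char.
  pose t := z / mu; have t0 : t != 0 by rewrite mulf_neq0 ?invr_eq0.
  pose R := (rho (hdiag t))^T.
  have Ru : R \in unitmx by rewrite unitmx_tr rho_unit // hdiag_unit.
  have HR : D^T *m R = t *: (R *m D^T).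
    by rewrite /R -!trmx_mul D_scale // linearZ.
  have HR' : invmx R *m D^T = t *: (D^T *m invmx R).
    rewrite -[LHS]mulmx1 -(mulmxV Ru) mulmxA -[invmx R *m D^T *m R]mulmxA HR.
    by rewrite -scalemxAr !mulmxA mulVmx // mul1mx -scalemxAl.
  apply/eigenvalueP; exists (v *m invmx R).
    rewrite -mulmxA HR' -scalemxAr mulmxA vD -scalemxAl scalerA.
    by rewrite /t mulfVK.
  by rewrite mulmx_free_eq0 // row_free_unit unitmx_inv.
have : 'X * char_poly (D^T) = 0.
  apply: poly_eq0_all => u; rewrite hornerM hornerX.
  have [->|u0] := eqVneq u 0; first by rewrite mul0r.
  by have /rootP -> := Hz u u0; rewrite mulr0.
apply/eqP; rewrite mulf_eq0 polyX_eq0 /=.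
by have /monic_neq0 := char_poly_monic (D^T).
Qed.


Lemma U_kernel U : stable_sub P N U -> (0 < \rank U)%N ->
  exists2 u : 'rV[k]_m, u != 0 & (u <= U)%MS /\ u *m D^T = 0.
Proof.
move=> sU rU.
pose V := row_base U.
have sV : (V *m D^T <= V)%MS.
  by rewrite /V !eq_row_base (submx_trans _ (D_stable sU)) // submxMr // eq_row_base.
have [a Ha] := eig_closed (conjmx V (D^T)) rU.
have Ha' := eigenvalue_conjmx sV (row_base_free U) Ha.
have a0 := D_eig0 Ha'; rewrite a0 in Ha.
move: Ha => /eigenvalueP [x xA x0].
have : (x <= eigenspace (conjmx V (D^T)) 0)%MS by apply/eigenspaceP.
rewrite sub_eigenspace_conjmx // ?row_base_free // => /eigenspaceP Hx.
exists (x *m V).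
  by rewrite mulmx_free_eq0 // row_base_free.
split; first by rewrite /V (submx_trans (submxMl _ _)) // eq_row_base.
by rewrite Hx scale0r.
Qed.


Definition Lam (V : 'M[k]_m) := kermx (row_mx D V^T).

Lemma Lam_prop a (L : 'M[k]_(a, m)) V : (L <= Lam V)%MS -> L *m D = 0 /\ L *m V^T = 0.
Proof.
by move/sub_kermxP; rewrite mul_mx_row => /eqP; rewrite row_mx_eq0 => /andP [/eqP -> /eqP ->].
Qed.

Lemma Lam_stable V c : stable_sub P N V -> c \in unitmx -> c *m J = J *m c ->
  (Lam V *m rho c <= Lam V)%MS.
Proof.
move=> sV cu cJ; have [H1 H2] := Lam_prop (submx_refl (Lam V)).
apply/sub_kermxP; rewrite mul_mx_row -mulmxA D_comm // mulmxA H1 mul0mx.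
have /submxP [X HX] := sV c cu.
have E : rho c *m V^T = V^T *m X^T by rewrite -trmx_mul -HX trmx_mul trmxK.
by rewrite -mulmxA E mulmxA H2 mul0mx row_mx0.
Qed.

Lemma rank_UD U : stable_sub P N U -> (0 < \rank U)%N -> (\rank (U *m D^T) < \rank U)%N.
Proof.
move=> sU rU; have [u u0 [uU uD]] := U_kernel sU rU.
rewrite -(eqmxMr _ (eq_row_base U)) ltnNge; apply/negP => H.
have rf : row_free (row_base U *m D^T).
  by rewrite /row_free eqn_leq H andbT (leq_trans (mxrankM_maxl _ _)) // rank_leq_row.
have /submxP [x Hx] : (u <= row_base U)%MS by rewrite eq_row_base.
move: uD; rewrite Hx -mulmxA => /eqP; rewrite mulmx_free_eq0 // => /eqP x0.
by move: u0; rewrite Hx x0 mul0mx eqxx.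
Qed.

Lemma Lam_rank U V : stable_sub P N U -> stable_sub P N V -> (1%:M <= U + V)%MS ->
  (\rank U + \rank V <= m)%N -> (0 < \rank U)%N -> (0 < \rank (Lam V))%N.
Proof.
move=> sU sV UV rUV rU; rewrite mxrank_ker subn_gt0.
rewrite -mxrank_tr tr_row_mx trmxK.
have S : (col_mx D^T V <= U *m D^T + V)%MS.
  rewrite col_mx_sub addsmxSr andbT.
  rewrite -{1}[D^T]mul1mx (submx_trans (submxMr _ UV)) //.
  rewrite addsmxMr addsmxS //.
  exact: D_stable.
apply: (leq_ltn_trans (mxrankS S)).
have [H _] := mxrank_adds_leqif (U *m D^T) V.
apply: (leq_ltn_trans H); apply: (leq_trans _ rUV).
by rewrite ltn_add2r rank_UD.
Qed.

Lemma Lam_nz (U V : 'M[k]_m) (l : 'rV[k]_m) : (1%:M <= U + V)%MS -> (l <= Lam V)%MS ->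
  l != 0 -> U *m l^T != 0.
Proof.
move=> UV lL l0; have [_ H2] := Lam_prop lL.
apply/negP => /eqP HU; move: l0; apply/negP; rewrite negbK.
have /submxP [X HX] : (1%:M <= col_mx U V)%MS by rewrite -addsmxE.
have : (1%:M *m l^T = 0).
  have HV : V *m l^T = 0 by rewrite -[V]trmxK -trmx_mul H2 trmx0.
  by rewrite HX -mulmxA mul_col_mx HU HV col_mx0 mulmx0.
by rewrite mul1mx => /(congr1 trmx); rewrite trmxK trmx0 => ->.
Qed.


Lemma sum_eqn (o : 'I_n) (F : 'I_n -> k) :
  \sum_(l < n) (l == o :> nat)%:R * F l = F o.
Proof.
rewrite (bigD1 o) //= eqxx mul1r big1 ?addr0 // => l /eqP H.
case: eqP => [Hl|]; last by rewrite mul0r.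
by exfalso; apply: H; apply/val_inj.
Qed.

Lemma sum_eqn0 (c : nat) (F : 'I_n -> k) : (n <= c)%N ->
  \sum_(l < n) (l == c :> nat)%:R * F l = 0.
Proof.
move=> cn; rewrite big1 // => l _; case: eqP => [Hl|]; last by rewrite mul0r.
by move: (ltn_ord l); rewrite Hl ltnNge cn.
Qed.

Lemma Jpow i : J ^+ i = \matrix_(a, b) ((a == (b + i)%N :> nat)%:R).
Proof.
elim: i => [|i IH].
  by apply/matrixP => a b; rewrite expr0 !mxE addn0.
apply/matrixP => a b; rewrite exprSr -mulmxE IH !mxE.
under eq_bigr => l _ do rewrite !mxE mulrC.
case: (ltnP b.+1 n) => bn.
  by rewrite -[b.+1]/(nat_of_ord (Ordinal bn)) sum_eqn /= addSnnS.
rewrite sum_eqn0 //; case: eqP => // Ha; move: (ltn_ord a); rewrite Ha.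
by move=> H; lia.
Qed.

Definition cent (c : 'M[k]_n) := c *m J = J *m c.

Lemma cent_pow c i : cent c -> c *m J ^+ i = J ^+ i *m c.
Proof.
move=> cJ; elim: i => [|i IH]; first by rewrite expr0 mulmx1 mul1mx.
by rewrite exprSr -mulmxE mulmxA IH -!mulmxA cJ.
Qed.

Lemma cent_entry (i0 : 'I_n) (h0 : nat_of_ord i0 = 0%N) c : cent c ->
  forall a b, c a b = \sum_(l < n) (a == (l + b)%N :> nat)%:R * c l i0.
Proof.
move=> cJ a b; have := cent_pow b cJ => /matrixP /(_ a i0).
rewrite Jpow !mxE.
under eq_bigr => j _ do rewrite mxE mulrC h0 add0n.
rewrite sum_eqn => ->.
by apply: eq_bigr => l _; rewrite mxE.
Qed.

Lemma cent_poly (i0 : 'I_n) (h0 : nat_of_ord i0 = 0%N) c : cent c ->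
  c = \sum_(i < n) c i i0 *: J ^+ i.
Proof.
move=> cJ; apply/matrixP => a b; rewrite (cent_entry h0 cJ) summxE.
by apply: eq_bigr => l _; rewrite Jpow !mxE mulrC addnC.
Qed.

Lemma cent_comm c c' : cent c -> cent c' -> c *m c' = c' *m c.
Proof.
case: (ltnP 0 n) => [n0|]; last first.
  by rewrite leqn0 => /eqP n0 _ _; apply/matrixP => i; have := ltn_ord i; rewrite {2}n0.
move=> cJ c'J; pose i0 : 'I_n := Ordinal n0.
rewrite (cent_poly (i0 := i0) _ cJ) //.
rewrite mulmx_suml mulmx_sumr; apply: eq_bigr => i _.
by rewrite -scalemxAl -scalemxAr cent_pow.
Qed.


Lemma cent_decomp (i0 : 'I_n) (h0 : nat_of_ord i0 = 0%N) c : c \in unitmx -> cent c ->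
  exists Y, [/\ c i0 i0 != 0, slow Y, cent Y & c = c i0 i0 *: (1%:M + Y)].
Proof.
move=> cu cJ; have E := cent_entry h0 cJ.
have Hd : forall a, c a a = c i0 i0.
  move=> a; rewrite E -[in RHS](sum_eqn i0 (fun l => c l i0)) h0.
  by apply: eq_bigr => l _; rewrite -{1}[nat_of_ord a]add0n eqn_add2r eq_sym.
have Hu : forall a b : 'I_n, (a < b)%N -> c a b = 0.
  move=> a b ab; rewrite E big1 // => l _; case: eqP => [Ha|]; last by rewrite mul0r.
  by move: ab; rewrite Ha ltnNge leq_addl.
have t0 : c i0 i0 != 0.
  move: cu; rewrite unitmxE det_trig; last by apply/is_trig_mxP.
  under eq_bigr => a _ do rewrite Hd.
  rewrite prodr_const card_ord unitfE; apply: contra => /eqP ->.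
  have nF : (n == 0%N) = false by apply/eqP => n0; have := ltn_ord i0; rewrite {2}n0.
  by rewrite expr0n nF eqxx.
exists ((c i0 i0)^-1 *: c - 1%:M); split => //.
- move=> a b; rewrite leq_eqVlt => /orP [/eqP ab|ab]; rewrite !mxE.
    have ab' : a = b by apply/val_inj.
    by rewrite ab' Hd eqxx mulVf // subrr.
  have nab : a != b by apply/eqP => e; move: ab; rewrite e ltnn.
  by rewrite (Hu _ _ ab) mulr0 (negbTE nab) subrr.
- by rewrite /cent mulmxBl mulmxBr mul1mx mulmx1 -!scalemxAl -scalemxAr cJ.
- by rewrite addrC subrK scalerA divff // scale1r.
Qed.


Definition qpoly (l : 'rV[k]_m) j0 A B := (map_mx polyC l *m Fpoly A B) 0 j0.

Lemma qpoly_eval l j0 A B u : (qpoly l j0 A B).[u] = (l *m evm u (Fpoly A B)) 0 j0.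
Proof. by rewrite -[l in RHS](evmC u) -evmM /evm mxE. Qed.

Lemma eig_nz (l : 'rV[k]_m) A a : l != 0 -> A \in unitmx -> l *m A = a *: l -> a != 0.
Proof.
move=> l0 Au H; apply/eqP => a0; move: H; rewrite a0 scale0r => /eqP.
by rewrite mulmx_free_eq0 ?row_free_unit // (negbTE l0).
Qed.

Section Char.
Variables (l : 'rV[k]_m) (j0 : 'I_m).
Hypothesis lj0 : l 0 j0 != 0.
Hypothesis Heig : forall c, c \in unitmx -> cent c -> exists a, l *m rho c = a *: l.

Lemma l_nz : l != 0.
Proof. by apply: contraNneq lj0 => ->; rewrite mxE. Qed.

Lemma char_unip Y : slow Y -> cent Y -> l *m rho (1%:M + Y) = l.
Proof.
move=> sY cY.
have cu : forall u, cent (1%:M + u *: Y).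
  by move=> u; rewrite /cent mulmxDl mulmxDr mul1mx mulmx1 -scalemxAl cY scalemxAr.
have Hq : forall u, exists2 a, a != 0 & (qpoly l j0 1%:M Y).[u] = a * l 0 j0.
  move=> u; rewrite qpoly_eval -rho_curve1 ?det_unip //.
  have [a Ha] := Heig (unip_unit u sY) (cu u).
  by exists a; [apply: eig_nz l_nz (rho_unit _) Ha; apply: unip_unit | rewrite Ha mxE].
have Hc := poly_noroot_const (p := qpoly l j0 1%:M Y).
have E : (qpoly l j0 1%:M Y).[1] = (qpoly l j0 1%:M Y).[0].
  by apply: Hc => u; have [b b0 ->] := Hq u; rewrite mulf_neq0.
have [b Hb] := Heig (unip_unit 1 sY) (cu 1).
move: E; rewrite !qpoly_eval -!rho_curve1 ?det_unip // scale0r addr0 rho1 mulmx1.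
rewrite Hb mxE -[l 0 j0 in RHS]mul1r => /(mulIf lj0) b1.
by move: Hb; rewrite b1 scale1r scale1r.
Qed.

Lemma char_scalar : exists e, forall t, t != 0 ->
  l *m rho t%:M = (t ^+ e / t ^+ (n * N)) *: l.
Proof.
have Et : forall t : k, t%:M = 0 + t *: (1%:M : 'M[k]_n).
  by move=> t; rewrite add0r scale_scalar_mx mulr1.
have Hr : forall t, (l *m rho t%:M) 0 j0 = ((t ^+ (n * N))^-1 * (qpoly l j0 0 1%:M).[t]).
  move=> t; rewrite qpoly_eval {1}Et rho_curve -Et det_scalar -exprM.
  by rewrite -scalemxAr mxE.
have tu : forall t : k, t != 0 -> (t%:M : 'M[k]_n) \in unitmx.
  by move=> t t0; rewrite unitmxE det_scalar unitfE expf_neq0.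
have tc : forall t : k, cent t%:M by move=> t; rewrite /cent scalar_mxC.
have Hnr : forall t, t != 0 -> (qpoly l j0 0 1%:M).[t] != 0.
  move=> t t0; have [a Ha] := Heig (tu t t0) (tc t).
  have a0 := eig_nz l_nz (rho_unit (tu t t0)) Ha.
  have := Hr t; rewrite Ha mxE => E.
  have -> : (qpoly l j0 0 1%:M).[t] = t ^+ (n * N) * (a * l 0 j0).
    by rewrite E mulrA mulfV ?mul1r // expf_neq0.
  by rewrite !mulf_neq0 // expf_neq0.
have [e He] := poly_mono Hnr.
exists e => t t0; have [a Ha] := Heig (tu t t0) (tc t).
have q1 : (qpoly l j0 0 1%:M).[1] = l 0 j0.
  by have := Hr 1; rewrite expr1n invr1 mul1r rho1 mulmx1 => <-.
have := Hr t; rewrite Ha mxE He q1 => E.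
suff -> : a = t ^+ e / t ^+ (n * N) by [].
apply: (mulIf lj0); rewrite E mulrCA [RHS]mulrC [_ / _]mulrC.
by [].
Qed.

Lemma char_full (i0 : 'I_n) (h0 : nat_of_ord i0 = 0%N) : exists e, forall c,
  c \in unitmx -> cent c -> l *m rho c = (c i0 i0 ^+ e / c i0 i0 ^+ (n * N)) *: l.
Proof.
have [e He] := char_scalar; exists e => c cu cc.
have [Y [t0 sY cY Ec]] := cent_decomp h0 cu cc.
have Yu : (1%:M + Y) \in unitmx by rewrite -[Y]scale1r unip_unit.
have tu : ((c i0 i0)%:M : 'M[k]_n) \in unitmx.
  by rewrite unitmxE det_scalar unitfE expf_neq0.
rewrite {1}Ec -mul_scalar_mx rhoM // mulmxA He // -scalemxAl char_unip //.
Qed.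

End Char.


Lemma orbit_cent g g' y1 : g \in unitmx -> g' \in unitmx ->
  g *m y1 *m invmx g = J -> g' *m y1 *m invmx g' = J -> cent (g' *m invmx g).
Proof.
move=> gu g'u H H'.
have E1 : invmx g *m J = y1 *m invmx g by rewrite -H !mulmxA mulVmx // mul1mx.
have E2 : J *m g' = g' *m y1 by rewrite -H' mulmxKV.
by rewrite /cent -mulmxA E1 mulmxA -E2 mulmxA.
Qed.

Lemma orbit_val g g' v v' y (l : 'rV[k]_m) a : g \in unitmx -> g' \in unitmx ->
  (Ad_semi P N g v y).1 = J -> (Ad_semi P N g' v' y).1 = J ->
  l *m D = 0 -> l *m rho (g' *m invmx g) = a *: l ->
  l *m (Ad_semi P N g' v' y).2 = a *: (l *m (Ad_semi P N g v y).2).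
Proof.
move=> gu g'u /= H H' lD lc; rewrite H H' !dratrep_slow; try exact: slowJ.
rewrite -/FJ -/D !mulmxDr !mulmxN !mulmxA lD !mul0mx oppr0 !add0r.
have -> : g' = (g' *m invmx g) *m g by rewrite mulmxKV.
by rewrite rhoM ?unitmx_mul ?unitmx_inv ?g'u ?gu // mulmxA lc -!scalemxAl.
Qed.


Section Comp.
Variables (r : nat) (Us : 'I_r -> 'M[k]_m).
Hypothesis Hirr : forall i, irr_sub P N (Us i).
Hypothesis Hdir : mxdirect (\sum_(i < r) Us i).
Hypothesis Hsum : (\sum_(i < r) Us i == 1%:M)%MS.

Lemma rank_sums_le (A : 'I_r -> 'M[k]_m) (Pr : pred 'I_r) :
  (\rank (\sum_(i < r | Pr i) A i)%MS <= \sum_(i < r | Pr i) \rank (A i))%N.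
Proof.
elim/big_rec2: _ => [|i x y _ H]; first by rewrite mxrank0.
by apply: leq_trans (mxrank_adds_leqif _ _).1 _; rewrite leq_add2l.
Qed.

Definition Vc j := (\sum_(l < r | l != j) Us l)%MS.

Lemma Us_stable j : stable_sub P N (Us j).
Proof. by case: (Hirr j). Qed.

Lemma Vc_stable j : stable_sub P N (Vc j).
Proof.
move=> g gu; rewrite /Vc (sumsmxMr _ _ _).
by apply: sumsmxS => l _; apply: Us_stable.
Qed.

Lemma Vc_split j : (\sum_(i < r) Us i :=: Us j + Vc j)%MS.
Proof. by rewrite (bigD1 j) //=. Qed.

Lemma UV1 j : (1%:M <= Us j + Vc j)%MS.
Proof. by rewrite -(Vc_split j); move/eqmxP: Hsum => ->; exact: submx_refl. Qed.

Lemma rankUV j : (\rank (Us j) + \rank (Vc j) <= m)%N.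
Proof.
have H1 : \rank (\sum_(i < r) Us i) = m by move/eqmxP: Hsum => ->; rewrite mxrank1.
have H2 : \rank (\sum_(i < r) Us i) = (\sum_(i < r) \rank (Us i))%N.
  by move/mxdirectP: Hdir.
have H4 : (\sum_(i < r) \rank (Us i))%N = m by rewrite -H2 H1.
rewrite -[X in (_ <= X)%N]H4 (bigD1 j) //= leq_add2l.
exact: rank_sums_le.
Qed.

Lemma comp_data j : exists (l : 'rV[k]_m) (w : 'cV[k]_m),
  [/\ l != 0, l *m D = 0, l *m (Vc j)^T = 0 & l *m w = 1%:M] /\ ((w^T <= Us j)%MS /\
     forall c, c \in unitmx -> cent c -> exists a, l *m rho c = a *: l).
Proof.
pose L := Lam (Vc j).
have rU : (0 < \rank (Us j))%N by case: (Hirr j).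
have rL := Lam_rank (Us_stable j) (Vc_stable j) (UV1 j) (rankUV j) rU.
have stL : forall c, c \in unitmx -> cent c -> stablemx L (rho c).
  by move=> c cu cc; apply: Lam_stable => //; apply: Vc_stable.
pose S' := fun B => exists2 c, (c \in unitmx /\ cent c) & B = restrictmx L (rho c).
have [v v0 Hv] : exists2 v : 'rV[k]_(\rank L), v != 0 & forall B, S' B -> (v *m B <= v)%MS.
  apply: comm_eig => // _ _ [c [cu cc] ->] [c' [c'u c'c] ->].
  rewrite -!conjmxM ?inE ?stablemx_row_base ?stL //.
  by rewrite -!rhoM // cent_comm.
pose l := v *m row_base L.
have l0 : l != 0 by rewrite mulmx_free_eq0 ?row_base_free.
have lL : (l <= L)%MS by rewrite (submx_trans (submxMl _ _)) // eq_row_base.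
have [lD lV] := Lam_prop lL.
have [i Hi] : exists i, (Us j *m l^T) i 0 != 0.
  apply: NNPP => Hn; have := Lam_nz (UV1 j) lL l0; apply/negP; rewrite negbK.
  apply/eqP/matrixP => a b; rewrite ord1 [in RHS]mxE.
  by apply/eqP; apply/negPn/negP => H; apply: Hn; exists a.
pose sc := (Us j *m l^T) i 0.
exists l, (sc^-1 *: (row i (Us j))^T); split; [split => // | split].
- apply/matrixP => a b; rewrite !ord1 -scalemxAr mxE.
  have E : (l *m (row i (Us j))^T) 0 0 = sc.
    by rewrite /sc !mxE; apply: eq_bigr => x _; rewrite !mxE mulrC.
  by rewrite E mulVf // mxE eqxx.
- by rewrite linearZ /= trmxK scalemx_sub // row_sub.
- move=> c cu cc; apply/sub_rVP; rewrite /l -stablemx_restrict ?stL //.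
  by apply: Hv; exists c.
Qed.

End Comp.

End Rep.

Lemma ratio_pow (k : closedFieldType) (t : k) e K : t != 0 -> t ^+ e / t ^+ K = 1 ->
  t ^+ ((e - K) + (K - e)) = 1.
Proof.
move=> t0; case: (leqP K e) => H.
  have -> : (K - e = 0)%N by apply/eqP; rewrite subn_eq0.
  rewrite addn0 -{1}(subnK H) exprD mulfK ?expf_neq0 //.
have -> : (e - K = 0)%N by apply/eqP; rewrite subn_eq0 ltnW.
rewrite add0n -{1}(subnK (ltnW H)) exprD invfM mulrCA mulfV ?expf_neq0 // mulr1.
by move/(congr1 GRing.inv); rewrite invrK invr1.
Qed.

Lemma char_pow (k : closedFieldType) (t : k) e K d : t ^+ d = 1 ->
  (t ^+ e / t ^+ K) ^+ d = 1.
Proof.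
by move=> H; rewrite exprMn exprVn -!exprM mulnC [(K * d)%N]mulnC !exprM H !expr1n invr1 mulr1.
Qed.

Lemma count_gen (k : closedFieldType) (T : eqType) (O : T -> k -> Prop) (d : nat) : (0 < d)%N ->
  (forall y z z', O y z -> O y z' -> z ^+ d = z' ^+ d) ->
  forall (s : seq T) (A : {poly k}), A != 0 ->
  (forall z, A.[z] = 0 \/ exists2 y, y \in s & O y z) ->
  exists2 Q : {poly k}, Q != 0 & forall z, Q.[z] = 0.
Proof.
move=> d0 HO; elim => [|y s IH] A A0 H.
  by exists A => // z; case: (H z) => // [[y]].
case: (classic (exists z0, O y z0)) => [[z0 Hz0]|Hn].
  apply: (IH (A * ('X^d - (z0 ^+ d)%:P))).
    by rewrite mulf_neq0 // -size_poly_eq0 size_XnsubC.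
  move=> z; case: (H z) => [Az|[y' /predU1P [->|ys] Oz]].
  - by left; rewrite hornerM Az mul0r.
  - by left; rewrite hornerM hornerD hornerN hornerXn hornerC (HO _ _ _ Oz Hz0) subrr mulr0.
  - by right; exists y'.
apply: (IH A A0) => z; case: (H z) => [Az|[y' /predU1P [->|ys] Oz]].
- by left.
- by exfalso; apply: Hn; exists z.
- by right; exists y'.
Qed.

Lemma count_false (k : closedFieldType) (T : eqType) (O : T -> k -> Prop) (d : nat) (s : seq T) : (0 < d)%N ->
  (forall y z z', O y z -> O y z' -> z ^+ d = z' ^+ d) ->
  (forall z, exists2 y, y \in s & O y z) -> False.
Proof.
move=> d0 HO H.
have [|Q Q0 HQ] := count_gen d0 HO (A := 1) (s := s) (oner_neq0 _).
  by move=> z; right.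
by move: Q0; rewrite (poly_eq0_all HQ) eqxx.
Qed.

Lemma J_nil (k : closedFieldType) n : (J k n) ^+ n = 0.
Proof.
apply/matrixP => a b; rewrite Jpow !mxE.
case: eqP => // H; have := ltn_ord a; rewrite H ltnNge leq_addl //.
Qed.


Theorem lemma1p3 (k : closedFieldType) (n m : nat)
  (P : 'I_m -> 'I_m -> {mpoly k[n * n]}) (N : nat) :
  (0 < m)%N ->
  is_rep P N ->
  compl_reducible P N ->
  finitely_many_orbits P N ->
  irreducible_mod P N.
Proof.
move=> m0 Hrep [r [Us [Hirr Hdir Hsum]]] [s Hs].
case: (ltnP 1 r) => r1; last first.
  case: r Us Hirr Hdir Hsum r1 => [|[|r]] Us Hirr Hdir Hsum r1; last by [].
    move: Hsum; rewrite big_ord0 => /eqmx_rank; rewrite mxrank0 mxrank1 => H.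
    by move: m0; rewrite -{1}H.
  move: Hsum; rewrite big_ord1 => /eqmxP HU.
  have [sU rU HV] := Hirr ord0.
  split.
  - by move=> g _; apply: submx1.
  - by rewrite mxrank1.
  - move=> V sV _; have VU : (V <= Us ord0)%MS.
      by apply: (submx_trans (submx1 V)); rewrite HU.
    case: (HV V sV VU) => H; [by left | right].
    by apply/eqmxP; apply: eqmx_trans HU; apply/eqmxP.
exfalso.
pose j0 : 'I_r := Ordinal (ltnW r1). pose j1 : 'I_r := Ordinal r1.
have j01 : j0 != j1 by [].
have [l1 [w1 [[l10 l1D l1V l1w] [w1U l1e]]]] := comp_data Hrep Hirr Hdir Hsum j0.
have [l2 [w2 [[l20 l2D l2V l2w] [w2U l2e]]]] := comp_data Hrep Hirr Hdir Hsum j1.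
have cross : forall (l : 'rV[k]_m) (w : 'cV[k]_m) j j', j' != j ->
    l *m (Vc Us j)^T = 0 -> (w^T <= Us j')%MS -> l *m w = 0.
  move=> l w j j' jj lV wU.
  have /submxP [X HX] : (w^T <= Vc Us j)%MS.
    by apply: submx_trans wU _; rewrite /Vc (sumsmx_sup j').
  by rewrite -[w]trmxK HX trmx_mul mulmxA lV mul0mx.
have l1w2 : l1 *m w2 = 0 by apply: cross l1V w2U; rewrite eq_sym.
have l2w1 : l2 *m w1 = 0 by apply: cross l2V w1U.
have nz : forall l : 'rV[k]_m, l != 0 -> exists j, l 0 j != 0.
  move=> l l0; apply: NNPP => Hn; move: l0; apply/negP; rewrite negbK.
  apply/eqP/matrixP => a b; rewrite ord1 [in RHS]mxE.
  by apply/eqP; apply/negPn/negP => H; apply: Hn; exists b.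
have [tf [e1 [e2 [K Hch]]]] : exists (tf : 'M[k]_n -> k) (e1 e2 K : nat),
  forall c, c \in unitmx -> cent c ->
   [/\ tf c != 0, l1 *m ratrep P N c = (tf c ^+ e1 / tf c ^+ K) *: l1 &
        l2 *m ratrep P N c = (tf c ^+ e2 / tf c ^+ K) *: l2].
  case: (ltnP 0 n) => n0.
    pose i0 : 'I_n := Ordinal n0.
    have [jj1 Hj1] := nz _ l10; have [jj2 Hj2] := nz _ l20.
    have [e1 He1] := char_full Hrep Hj1 l1e (i0 := i0) erefl.
    have [e2 He2] := char_full Hrep Hj2 l2e (i0 := i0) erefl.
    exists (fun c => c i0 i0), e1, e2, (n * N)%N => c cu cc; split.
    - by have [Y [? _ _ _]] := cent_decomp (i0 := i0) erefl cu cc.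
    - exact: He1.
    - exact: He2.
  exists (fun _ => 1), 0%N, 0%N, 0%N => c cu cc.
  have c1 : c = 1%:M.
    by apply/matrixP => i; have := ltn_ord i; rewrite leqn0 in n0; rewrite {2}(eqP n0).
  by rewrite c1 rho1 // !mulmx1 !expr0 invr1 mulr1 !scale1r; split => //; apply: oner_neq0.
pose al := fun z : k => if e1 == K then z else 1.
pose be := fun z : k => if e1 == K then 1 else z.
pose pt := fun z : k => (J k n, al z *: w1 + be z *: w2).
pose O := fun y z => exists g v, g \in unitmx /\ pt z = Ad_semi P N g v y.
pose d := if e1 == K then 1%N else ((e1 - K) + (K - e1))%N.
have l1pt : forall z, l1 *m (pt z).2 = (al z)%:M.
  by move=> z; rewrite /= mulmxDr -!scalemxAr l1w l1w2 scaler0 addr0 scale_scalar_mx mulr1.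
have l2pt : forall z, l2 *m (pt z).2 = (be z)%:M.
  by move=> z; rewrite /= mulmxDr -!scalemxAr l2w l2w1 scaler0 add0r scale_scalar_mx mulr1.
have sc1 : forall (a b c : k), a%:M = c *: (b%:M : 'M[k]_1) -> a = c * b.
  by move=> a b c /matrixP /(_ 0 0); rewrite !mxE eqxx !mulr1n.
apply: (count_false (d := d) (s := s) (O := O)).
- rewrite /d; case: eqP => // /eqP H; rewrite addn_gt0 !subn_gt0.
  by case: (ltngtP e1 K) H => //; rewrite eqxx.
- move=> y z z' [g [v [gu E]]] [g' [v' [g'u E']]].
  have H1 : (Ad_semi P N g v y).1 = J k n by rewrite -E.
  have H1' : (Ad_semi P N g' v' y).1 = J k n by rewrite -E'.
  have cc : cent (g' *m invmx g) := orbit_cent gu g'u H1 H1'.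
  have cu : g' *m invmx g \in unitmx by rewrite unitmx_mul g'u unitmx_inv.
  have [t0 Hl1 Hl2] := Hch _ cu cc.
  have R1 := orbit_val Hrep gu g'u H1 H1' l1D Hl1.
  have R2 := orbit_val Hrep gu g'u H1 H1' l2D Hl2.
  rewrite -E -E' l1pt l1pt in R1; rewrite -E -E' l2pt l2pt in R2.
  move/sc1: R1; move/sc1: R2; rewrite /al /be /d.
  case: eqP => [eK|_] R2 R1.
    by rewrite R1 eK divff ?expf_neq0 // mul1r.
  rewrite mulr1 in R1.
  have td := ratio_pow t0 (esym R1).
  by rewrite R2 exprMn char_pow // mul1r.
- move=> z; have [y ys Hy] := Hs (pt z) (ex_intro _ n (J_nil k n)).
  by exists y => //.
Qed.
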